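(* Assume the setting and Hypotheses (H1)--(H5) of the context. Define, for $V\in\mathcal{D}$ and $0\le\mu\le\mu_0$, \[ \hat F(V,\mu):=L_0V-\chi_1^*[V]\chi_0+\mu\left(L_1(\mu)V-\chi_0^*[L_1(\mu)V]\chi_0\right)+Q(V,\mu)-\chi_0^*[Q(V,\mu)]\chi_0 . \] Then $DJ_\mu(V)\hat F(V,\mu)=0$ for all $V\in\hat{\mathcal{D}}:=\{V\in\mathcal{D}:\chi_0^*[V]=0\}$.
   Context: Setting. $\mathcal{D}\subseteq\mathcal{X}$ are real Banach spaces with $\mathcal{D}$ continuously embedded in $\mathcal{X}$; spectral notions refer to the complexifications, with $L_0\in\mathcal{B}(\mathcal{D},\mathcal{X})$ regarded as an operator in $\mathcal{X}$ with domain $\mathcal{D}$; $\mu_0>0$. (H1) $F(U,\mu)=L_0U+\mu L_1(\mu)U+Q(U,\mu)$ with $L_0\in\mathcal{B}(\mathcal{D},\mathcal{X})$, and $L_1:[0,\mu_0]\to\mathcal{B}(\mathcal{D},\mathcal{X})$, $Q:\mathcal{X}\times[0,\mu_0]\to\mathcal{X}$ analytic, $Q(0,\mu)=0$, $D_UQ(0,\mu)=0$. (H2) $\mathcal{S}\in\mathcal{B}(\mathcal{X})$, $\mathcal{S}^2=I$, $\|\mathcal{S}\|=1$, $\mathcal{S}L_0=-L_0\mathcal{S}$, $\mathcal{S}L_1(\mu)=-L_1(\mu)\mathcal{S}$, $Q(\mathcal{S}U,\mu)=-\mathcal{S}Q(U,\mu)$ for $U\in\mathcal{D}$. (H3) For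 some $\omega>0$, $\sigma(L_0)\cap i\mathbb{R}=\{0,\pm i\omega\}$, all geometrically simple eigenvalues, $0$ of algebraic multiplicity $4$, $\pm i\omega$ of algebraic multiplicity $1$, and $|\mathrm{Re}\lambda|\ge\lambda_0>0$ for $\lambda\in\sigma(L_0)\setminus i\mathbb{R}$. (H4) The spectral projection of $L_0$ for the eigenvalue $0$ is $\Pi_0U=\sum_{k=0}^3\chi_k^*[U]\chi_k$ with $\chi_k\in\mathcal{D}$, $L_0\chi_0=0$, $L_0\chi_{k+1}=\chi_k$ ($k=0,1,2$), $\chi_k^*\in\mathcal{X}^*$; and (i) $L_1(\mu)\chi_0=0$, (ii) $Q(U+\gamma\chi_0,\mu)=Q(U,\mu)$ for $U\in\mathcal{D}$, $\gamma\in\mathbb{R}$, (iii) $\mathcal{S}\chi_k=(-1)^{k+1}\chi_k$. (H5) For each $\mu$, $J_\mu:\mathcal{X}\to\mathbb{R}$ with: $(U,\mu)\mapsto J_\mu(U)$ analytic; $DJ_\mu(U)F(U,\mu)=0$ for $U\in\mathcal{D}$; $J_\mu(\mathcal{S}U)=J_\mu(U)$; $J_0(0)=0$ and there is analytic $\mu\mapsto\mathscr{J}_*(\mu)\in\mathcal{X}^*$ with $J_\mu(U)-J_0(U)=\mu\mathscr{J}_*(\mu)U$ for $U\in\mathcal{D}$; $J_\mu(U+\gamma\chi_0)=J_\mu(U)$ for $U\in\mathcal{D}$, $\gamma\in\mathbb{R}$; $\chi_3^*[U]=DJ_0(0)U$. *)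

(* Defs.v *)
From HB Require Import structures.
From mathcomp Require Import all_boot all_order all_algebra.
From mathcomp Require Import all_classical all_reals all_analysis.
Set Implicit Arguments. Unset Strict Implicit. Unset Printing Implicit Defensive.
Import Order.TTheory GRing.Theory Num.Theory.
Import numFieldNormedType.Exports.
Local Open Scope ring_scope.
Local Open Scope classical_set_scope.

Section Generic.
Variable R : realType.

Definition bounded_linear (V W : normedModType R) (f : V -> W) : Prop :=
  (forall (a : R) (u v : V), f (a *: u + v) = a *: f u + f v) /\
  exists C : R, forall u, `|f u| <= C * `|u|.

Definition opnorm_eq1 (V : normedModType R) (S : V -> V) : Prop :=
  (forall x, `|S x| <= `|x|) /\
  (forall C : R, (forall x, `|S x| <= C * `|x|) -> 1 <= C).

Definition multilinear (V W : normedModType R) (n : nat)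
  (A : ('I_n -> V) -> W) : Prop :=
  forall (i : 'I_n) (h : 'I_n -> V) (a : R) (u v : V),
    A (fun j => if j == i then a *: u + v else h j) =
    a *: A (fun j => if j == i then u else h j) +
    A (fun j => if j == i then v else h j).

Definition analytic_at (V W : normedModType R) (f : V -> W) (x : V) : Prop :=
  exists (A : forall n : nat, ('I_n -> V) -> W) (C : nat -> R) (r : R),
    0 < r /\
    (forall n, multilinear (A n)) /\
    (forall n, 0 <= C n) /\
    (forall n (h : 'I_n -> V), `|A n h| <= C n * \prod_(i < n) `|h i|) /\
    cvgn (series (fun n => C n * r ^+ n)) /\
    (forall y : V, `|y - x| < r ->
       series (fun n => A n (fun _ => y - x)) @ \oo --> f y).

(* analytic on a set (f defined on the whole space; analyticity required at
   each point of A, i.e. f extends analytically to a neighbourhood of A) *)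
Definition analytic_on (V W : normedModType R) (f : V -> W) (A : set V) :=
  forall x, A x -> analytic_at f x.

Definition op_analytic_at (V W : normedModType R) (T : R -> V -> W) (m : R) :=
  exists (B : nat -> V -> W) (c : nat -> R) (r : R),
    0 < r /\
    (forall n, (forall (a : R) (u v : V), B n (a *: u + v) = a *: B n u + B n v)
               /\ 0 <= c n /\ forall u, `|B n u| <= c n * `|u|) /\
    cvgn (series (fun n => c n * r ^+ n)) /\
    (forall t : R, `|t| < r -> forall eps : R, 0 < eps ->
       \forall N \near \oo, forall u : V,
         `|T (m + t) u - \sum_(0 <= n < N) (t ^+ n) *: B n u| <= eps * `|u|).

Definition op_analytic_on (V W : normedModType R) (T : R -> V -> W) (A : set R) :=
  forall m, A m -> op_analytic_at T m.

(* X_C is modelled as X * X (p = p.1 + i p.2), complex numbers as R * R. *)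
Definition cscale (V : lmodType R) (c : R * R) (p : V * V) : V * V :=
  (c.1 *: p.1 - c.2 *: p.2, c.2 *: p.1 + c.1 *: p.2).

Definition cnorm (V : normedModType R) (p : V * V) : R := `|p.1| + `|p.2|.

Section Spectral.
Variables (D X : normedModType R) (iota : D -> X) (L : D -> X).

Definition iotaC (p : D * D) : X * X := (iota p.1, iota p.2).

(* (L - lambda) on the complexification, lambda = a + i b *)
Definition shiftC (a b : R) (p : D * D) : X * X :=
  (L p.1 - a *: iota p.1 + b *: iota p.2, L p.2 - b *: iota p.1 - a *: iota p.2).

Definition in_resolvent (a b : R) : Prop :=
  exists g : X * X -> D * D,
    cancel (shiftC a b) g /\ cancel g (shiftC a b) /\
    exists C : R, forall q, cnorm (iotaC (g q)) <= C * cnorm q.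

Definition in_spectrum (a b : R) : Prop := ~ in_resolvent a b.

Definition is_eigenvalue (a b : R) : Prop :=
  exists p : D * D, p <> (0, 0) /\ shiftC a b p = (0, 0).

Definition geom_simple (a b : R) : Prop :=
  exists w : D * D, w <> (0, 0) /\ shiftC a b w = (0, 0) /\
    forall p, shiftC a b p = (0, 0) -> exists c, p = cscale c w.

(* p lies in ker (L - lambda)^k (all intermediate iterates in D_C) *)
Fixpoint gen_ker (a b : R) (k : nat) (p : D * D) : Prop :=
  match k with
  | 0%N => p = (0, 0)
  | k'.+1 => exists q : D * D, iotaC q = shiftC a b p /\ gen_ker a b k' q
  end.

Definition gen_eig (a b : R) (p : D * D) : Prop := exists k, gen_ker a b k p.

(* the spectral (Riesz) projection for lambda = a + i b: the bounded
   complex-linear projection onto the generalised eigenspace, commuting with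
   L, along an L-invariant complement on which L - lambda is boundedly
   invertible *)
Definition spectral_proj (a b : R) (P : X * X -> X * X) : Prop :=
  (forall c p q, P (cscale c p + q) = cscale c (P p) + P q) /\
  (exists C : R, forall p, cnorm (P p) <= C * cnorm p) /\
  (forall p, P (P p) = P p) /\
  (forall q, (exists p, P p = q) <-> (exists d, iotaC d = q /\ gen_eig a b d)) /\
  (forall d : D * D, exists d' : D * D,
      iotaC d' = P (iotaC d) /\ shiftC a b d' = P (shiftC a b d)) /\
  (forall q, P q = (0, 0) ->
      exists d : D * D, P (iotaC d) = (0, 0) /\ shiftC a b d = q) /\
  (exists C : R, forall d : D * D, P (iotaC d) = (0, 0) ->
      cnorm (iotaC d) <= C * cnorm (shiftC a b d)).

Definition gen_eig_dim (a b : R) (m : nat) : Prop :=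
  exists w : 'I_m -> D * D,
    (forall i, gen_eig a b (w i)) /\
    (forall d, gen_eig a b d ->
       exists c : 'I_m -> R * R, d = \sum_(i < m) cscale (c i) (w i)) /\
    (forall c : 'I_m -> R * R,
       \sum_(i < m) cscale (c i) (w i) = 0 -> forall i, c i = (0, 0)).

Definition alg_mult (a b : R) (m : nat) : Prop :=
  (exists P, spectral_proj a b P) /\ gen_eig_dim a b m.

End Spectral.

Definition Fhat (D X : normedModType R) (iota : D -> X) (L0 : D -> X)
  (L1 : R -> D -> X) (Q : X -> R -> X) (chi0 : D)
  (chi0s chi1s : X -> R) (V : D) (mu : R) : X :=
  L0 V - chi1s (iota V) *: iota chi0
  + mu *: (L1 mu V - chi0s (L1 mu V) *: iota chi0)
  + Q (iota V) mu - chi0s (Q (iota V) mu) *: iota chi0.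

End Generic.

(* Main.v *)
From HB Require Import structures.
From mathcomp Require Import all_boot all_order all_algebra.
From mathcomp Require Import all_classical all_reals all_analysis.
From mathcomp Require Import ring.
Require Import Defs.
Import Order.TTheory GRing.Theory Num.Theory.
Import numFieldNormedType.Exports.
Local Open Scope ring_scope.
Local Open Scope classical_set_scope.

Lemma diff_quad (R: realType) (V : normedModType R) (f : V -> R) x (l : V -> R) (K M r : R) :
  (forall a u v, l (a *: u + v) = a *: l u + l v) -> (forall h, `|l h| <= K * `|h|) -> 0 < r ->
  (forall h, `|h| < r -> `|f (h + x) - f x - l h| <= M * `|h| ^+ 2) ->
  forall v, (forall t : R, f (t *: v + x) = f x) -> 'd f x v = 0.
Proof.
move=> Hl Kl r0 Hq v Hv.
pose L : {linear V -> R} := HB.pack l (GRing.isLinear.Build _ _ _ _ l Hl).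
have Lc : continuous L.
  apply/linear_bounded_continuous/bounded_funP => s.
  exists (`|K| * `|s|) => y ys /=.
  apply: (le_trans (Kl y)); apply: (le_trans (ler_norm _)); rewrite normrM normr_id.
  by rewrite ler_wpM2l // (le_trans ys) // ler_norm.
have Ho : f \o shift x = cst (f x) + (L : V -> R) +o_ (nbhs (0:V)) id.
  apply/eqaddoP => e e0.
  have M1 : 0 < `|M| + 1 by rewrite ltr_wpDl.
  have em : 0 < Num.min r (e / (`|M| + 1)) by rewrite lt_min r0 divr_gt0.
  near=> h.
  have hs : `|h| < Num.min r (e / (`|M| + 1)) by near: h; apply: nbhs0_lt.
  move: hs; rewrite lt_min => /andP[hr he].
  rewrite /= opprD addrA.
  apply: (le_trans (Hq h hr)).
  rewrite expr2 mulrA ler_wpM2r //.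
  apply: (@le_trans _ _ ((`|M| + 1) * `|h|)).
    by rewrite ler_wpM2r // (le_trans (ler_norm _)) // lerDl.
  by rewrite mulrC -ler_pdivlMr // ltW.
have dE := diff_unique Lc Ho.
have dif : differentiable f x.
  by apply/diff_locallyP; rewrite dE; split.
rewrite -deriveE //.
apply/lim_near_cst => //=.
near=> h.
by rewrite Hv subrr scaler0.
Unshelve. all: by end_near.
Qed.

Lemma analytic_quad (R : realType) (X : normedModType R) (g : X * R -> R) (x : X) (m : R) :
  analytic_at g (x, m) ->
  exists (l : X -> R) (K M r : R),
   (forall a u v, l (a *: u + v) = a *: l u + l v) /\ (forall h, `|l h| <= K * `|h|) /\ 0 < r /\
   forall h, `|h| < r -> `|g (h + x, m) - g (x, m) - l h| <= M * `|h| ^+ 2.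
Proof.
move=> [A [C [r [r0 [Aml [C0 [AC [Cs Aser]]]]]]]].
pose a n (k : X) := A n (fun _ => (k, 0)).
have nk (k : X) : `|(k, 0 : R)| = `|k|.
  by rewrite prod_normE /= normr0; apply/max_idPl.
have aB n k : `|a n k| <= C n * `|k| ^+ n.
  apply: (le_trans (AC n _)); rewrite (eq_bigr (fun _ => `|k|)); last by move=> i _; rewrite nk.
  by rewrite prodr_const card_ord.
pose l := a 1%N.
have lin : forall b u v, l (b *: u + v) = b *: l u + l v.
  move=> b u v; rewrite /l /a.
  have := Aml 1%N ord0 (fun _ => 0) b (u, 0) (v, 0).
  have E : forall w : X * R, (fun j : 'I_1 => if j == ord0 then w else 0) = (fun _ => w).
    by move=> w; apply/funext => j; rewrite (ord1 j) eqxx.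
  rewrite !E => <-; congr (A 1%N _); apply/funext => j /=.
  by apply: injective_projections => /=; rewrite ?scaler0 ?addr0.
have lB h : `|l h| <= C 1%N * `|h| by have := aB 1%N h; rewrite expr1.
pose c := A 0%N (fun _ => (0, 0)).
have a0 k : a 0%N k = c by rewrite /a /c; congr (A 0%N _); apply/funext => -[].
pose S := limn (series (fun n => C n * r ^+ n)).
have Sle N : \sum_(0 <= n < N) C n * r ^+ n <= S.
  apply: (nondecreasing_cvgn_le _ Cs) => p q pq.
  rewrite /series /= (big_cat_nat (leq0n p) pq) /= lerDl.
  by apply: sumr_ge0 => i _; rewrite mulr_ge0 // exprn_ge0 // ltW.
pose M := S / r ^+ 2.
have P h : `|h| < r -> `|g (h + x, m) - c - l h| <= M * `|h| ^+ 2.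
  move=> hr.
  have := Aser (h + x, m).
  have E : (h + x, m) - (x, m) = (h, 0).
    by apply: injective_projections => /=; rewrite ?addrK ?subrr.
  rewrite E nk => /(_ hr) Hs.
  set G := g _ in Hs *.
  have Hc : (fun N => `|series (fun n => a n h) N - c - l h|) @ \oo --> `|G - c - l h|.
    by apply: cvg_norm; apply: cvgB; [apply: cvgB => //; apply: cvg_cst | apply: cvg_cst].
  rewrite -(cvg_lim _ Hc) //; apply: limr_le; first by apply/cvg_ex; eexists; exact: Hc.
  near=> N.
  have N2 : (2 <= N)%N by near: N; exists 2%N.
  rewrite /series /= big_ltn; last by apply: leq_trans N2.
  rewrite big_ltn // a0 -/l (addrC c) addrK (addrC (l h)) addrK.
  apply: (le_trans (ler_norm_sum _ _ _)).
  apply: (@le_trans _ _ (\sum_(2 <= i < N) (`|h| ^+ 2 / r ^+ 2) * (C i * r ^+ i))).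
    rewrite big_nat [X in _ <= X]big_nat; apply: ler_sum => i /andP[i2 _].
    apply: (le_trans (aB i h)).
    case: i i2 => [|[|k]] // _.
    have r2 : r ^+ 2 != 0 by rewrite expf_neq0 // gt_eqF.
    have -> : `|h| ^+ 2 / r ^+ 2 * (C k.+2 * r ^+ k.+2) = C k.+2 * (`|h| ^+ 2 * r ^+ k).
      rewrite !exprS expr0 mulr1; field; exact: lt0r_neq0.

    rewrite ler_wpM2l //.
    rewrite [X in X <= _](_ : _ = `|h| ^+ 2 * `|h| ^+ k); last by rewrite !exprS expr0 mulr1 !mulrA.
    rewrite ler_wpM2l ?exprn_ge0 //.
    apply: (lerXn2r k); [exact: normr_ge0 | exact: ltW | exact: ltW].
  have -> : M * `|h| ^+ 2 = `|h| ^+ 2 / r ^+ 2 * S by rewrite /M mulrC mulrA mulrAC.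
  rewrite -mulr_sumr ler_wpM2l //; first by rewrite divr_ge0 // ?exprn_ge0 // ltW.
  apply: (le_trans _ (Sle N)).
  rewrite [X in _ <= X](big_cat_nat (leq0n 2) N2) /= lerDr.
  by apply: sumr_ge0 => i _; rewrite mulr_ge0 // exprn_ge0 // ltW.
have gc : g (x, m) = c.
  have := P 0; rewrite normr0 expr0n /= mulr0 add0r => /(_ r0).
  have l0 : l 0 = 0 by apply/eqP; rewrite -normr_le0 (le_trans (lB 0)) // normr0 mulr0.
  by rewrite l0 subr0 normr_le0 subr_eq0 => /eqP.
exists l, (C 1%N), M, r; split => //; split => //; split => //.
by move=> h hr; rewrite gc; apply: P.
Unshelve. all: by end_near.
Qed.

Lemma rearr (R : comNzRingType) (W : lmodType R) (a b q e : W) (c1 c0 c2 mu : R) :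
  a - c1 *: e + mu *: (b - c0 *: e) + q - c2 *: e
  = a + mu *: b + q - (c1 + mu * c0 + c2) *: e.
Proof.
rewrite scalerBr scalerA !scalerDl !opprD !addrA.
rewrite (addrAC a (- (c1 *: e)) (mu *: b)).
rewrite (addrAC (a + mu *: b - c1 *: e) (- ((mu * c0) *: e)) q).
by rewrite (addrAC (a + mu *: b) (- (c1 *: e)) q).
Qed.

Theorem lemma2p5
  (R : realType) (D X : completeNormedModType R)
  (iota : D -> X) (iota_bl : bounded_linear iota) (iota_inj : injective iota)
  (mu0 : R) (mu0_gt0 : 0 < mu0)
  (* (H1) *)
  (L0 : D -> X) (L1 : R -> D -> X) (Q : X -> R -> X)
  (L0_bl : bounded_linear L0)
  (L1_bl : forall mu, 0 <= mu <= mu0 -> bounded_linear (L1 mu))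
  (L1_an : op_analytic_on L1 [set mu | 0 <= mu <= mu0])
  (Q_an : analytic_on (fun p : X * R => Q p.1 p.2) [set p | 0 <= p.2 <= mu0])
  (Q0 : forall mu, 0 <= mu <= mu0 -> Q 0 mu = 0)
  (DQ0 : forall mu, 0 <= mu <= mu0 -> forall h : X, 'd (fun U => Q U mu) 0 h = 0)
  (* (H2) *)
  (S : X -> X) (SD : D -> D)
  (S_bl : bounded_linear S) (S_inv : forall x, S (S x) = x) (S_norm : opnorm_eq1 S)
  (SD_def : forall U : D, iota (SD U) = S (iota U))
  (S_L0 : forall U : D, L0 (SD U) = - S (L0 U))
  (S_L1 : forall mu, 0 <= mu <= mu0 -> forall U : D, L1 mu (SD U) = - S (L1 mu U))
  (S_Q : forall mu, 0 <= mu <= mu0 -> forall U : D,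
           Q (S (iota U)) mu = - S (Q (iota U) mu))
  (* (H3) *)
  (omega : R) (omega_gt0 : 0 < omega)
  (spec_iR : forall b : R, in_spectrum iota L0 0 b <-> (b = 0 \/ b = omega \/ b = - omega))
  (eig0 : is_eigenvalue iota L0 0 0) (eigp : is_eigenvalue iota L0 0 omega)
  (eigm : is_eigenvalue iota L0 0 (- omega))
  (gs0 : geom_simple iota L0 0 0) (gsp : geom_simple iota L0 0 omega)
  (gsm : geom_simple iota L0 0 (- omega))
  (am0 : alg_mult iota L0 0 0 4) (amp : alg_mult iota L0 0 omega 1)
  (amm : alg_mult iota L0 0 (- omega) 1)
  (gap : exists lambda0 : R, 0 < lambda0 /\
     forall a b : R, in_spectrum iota L0 a b -> a <> 0 -> lambda0 <= `|a|)
  (* (H4) *)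
  (chi0 chi1 chi2 chi3 : D) (chi0s chi1s chi2s chi3s : X -> R)
  (chi0s_bl : bounded_linear chi0s) (chi1s_bl : bounded_linear chi1s)
  (chi2s_bl : bounded_linear chi2s) (chi3s_bl : bounded_linear chi3s)
  (Pi0_spec : spectral_proj iota L0 0 0
     (fun p : X * X =>
        let Pi0 := fun U : X => chi0s U *: iota chi0 + chi1s U *: iota chi1
                              + chi2s U *: iota chi2 + chi3s U *: iota chi3 in
        (Pi0 p.1, Pi0 p.2)))
  (L0_chi0 : L0 chi0 = 0) (L0_chi1 : L0 chi1 = iota chi0)
  (L0_chi2 : L0 chi2 = iota chi1) (L0_chi3 : L0 chi3 = iota chi2)
  (L1_chi0 : forall mu, 0 <= mu <= mu0 -> L1 mu chi0 = 0)
  (Q_chi0 : forall mu, 0 <= mu <= mu0 -> forall (U : D) (gamma : R),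
      Q (iota U + gamma *: iota chi0) mu = Q (iota U) mu)
  (S_chi0 : S (iota chi0) = - iota chi0) (S_chi1 : S (iota chi1) = iota chi1)
  (S_chi2 : S (iota chi2) = - iota chi2) (S_chi3 : S (iota chi3) = iota chi3)
  (* (H5) *)
  (J : R -> X -> R) (Jstar : R -> X -> R)
  (J_an : analytic_on (fun p : X * R => J p.2 p.1) [set p | 0 <= p.2 <= mu0])
  (J_cons : forall mu, 0 <= mu <= mu0 -> forall U : D,
      'd (J mu) (iota U) (L0 U + mu *: L1 mu U + Q (iota U) mu) = 0)
  (J_S : forall mu, 0 <= mu <= mu0 -> forall U : X, J mu (S U) = J mu U)
  (J00 : J 0 0 = 0)
  (Jstar_bl : forall mu, 0 <= mu <= mu0 -> bounded_linear (Jstar mu))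
  (Jstar_an : op_analytic_on Jstar [set mu | 0 <= mu <= mu0])
  (J_Jstar : forall mu, 0 <= mu <= mu0 -> forall U : D,
      J mu (iota U) - J 0 (iota U) = mu * Jstar mu (iota U))
  (J_chi0 : forall mu, 0 <= mu <= mu0 -> forall (U : D) (gamma : R),
      J mu (iota U + gamma *: iota chi0) = J mu (iota U))
  (chi3s_DJ : forall U : X, chi3s U = 'd (J 0) 0 U) :
  forall mu : R, 0 <= mu <= mu0 -> forall V : D, chi0s (iota V) = 0 ->
    'd (J mu) (iota V) (Fhat iota L0 L1 Q chi0 chi0s chi1s V mu) = 0.
Proof.
move=> mu hmu V hV.
have an : @analytic_at R _ _ (fun p : X * R => J p.2 p.1) (iota V, mu) by apply: J_an.
have [l [K [M [r [lin [lB [r0 Hq]]]]]]] := @analytic_quad _ _ _ _ _ an.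
have Dchi0 : 'd (J mu) (iota V) (iota chi0) = 0.
  apply: (@diff_quad _ _ _ _ _ _ _ _ lin lB r0) => [h hr|t]; first exact: (Hq h hr).
  by rewrite addrC J_chi0.
have Hc := J_cons mu hmu V.

rewrite (_ : Fhat iota L0 L1 Q chi0 chi0s chi1s V mu =
  L0 V + mu *: L1 mu V + Q (iota V) mu
  - (chi1s (iota V) + mu * chi0s (L1 mu V) + chi0s (Q (iota V) mu)) *: iota chi0);
  last exact: rearr.
have Dc : 'd (J mu) (iota V)
    ((chi1s (iota V) + mu * chi0s (L1 mu V) + chi0s (Q (iota V) mu)) *: iota chi0) = 0.
  by rewrite linearZ /= Dchi0 scaler0.
have E : 'd (J mu) (iota V) (L0 V + mu *: L1 mu V + Q (iota V) mu
  - (chi1s (iota V) + mu * chi0s (L1 mu V) + chi0s (Q (iota V) mu)) *: iota chi0)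
  = 'd (J mu) (iota V) (L0 V + mu *: L1 mu V + Q (iota V) mu)
  - 'd (J mu) (iota V) ((chi1s (iota V) + mu * chi0s (L1 mu V) + chi0s (Q (iota V) mu)) *: iota chi0).
  exact: raddfB.
rewrite E Dc subr0.
exact: Hc.
Qed.
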